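(* Let $n,r\ge1$. The sequence \[ 0\to\mathbb{R}\to\mathcal{S}_r^-\Lambda^0(\mathbb{R}^n)\xrightarrow{d}\mathcal{S}_r^-\Lambda^1(\mathbb{R}^n)\xrightarrow{d}\cdots\xrightarrow{d}\mathcal{S}_r^-\Lambda^{n-1}(\mathbb{R}^n)\xrightarrow{d}\mathcal{S}_r^-\Lambda^n(\mathbb{R}^n)\to0, \] where $\mathbb{R}\to\mathcal{S}_r^-\Lambda^0$ is the inclusion of constant functions and the other maps are the exterior derivative, is exact.
   Context: Fix $n\ge1$. For a multi-index $\alpha\in\mathbb{N}^n$ and a subset $\sigma=\{\sigma(1)<\dots<\sigma(k)\}\subset\{1,\dots,n\}$, the form monomial is $x^\alpha dx_\sigma:=x_1^{\alpha_1}\cdots x_n^{\alpha_n}\,dx_{\sigma(1)}\wedge\cdots\wedge dx_{\sigma(k)}$, of degree $|\alpha|$. $\mathcal{H}_r\Lambda^k(\mathbb{R}^n)$ is the span of form monomials with $|\alpha|=r$, $|\sigma|=k$ (it is $0$ if $r<0$ or $k\notin\{0,\dots,n\}$), and $\mathcal{P}_r\Lambda^k:=\bigoplus_{j=0}^r\mathcal{H}_j\Lambda^k$ ($=0$ if $r<0$). $d$ is the exterior derivative. The Koszul operator $\kappa$ is defined on monomials by $\kappa(x^\alpha dx_\sigma)=\sum_{i=1}^k(-1)^{i+1}x^\alpha x_{\sigma(i)}\,dx_{\sigma(1)}\wedge\cdots\wedge\widehat{dx_{\sigma(i)}}\wedge\cdots\wedge dx_{\sigma(k)}$ and extended linearly.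 The linear degree is $\mathrm{ldeg}(x^\alpha dx_\sigma):=\#\{i\notin\sigma:\alpha_i=1\}$, and $\mathcal{H}_{r,l}\Lambda^k$ is the span of form monomials in $\mathcal{H}_r\Lambda^k$ with linear degree $\ge l$. Define $\mathcal{J}_r\Lambda^k:=\sum_{l\ge1}\kappa\,\mathcal{H}_{r+l-1,l}\Lambda^{k+1}$, the serendipity space $\mathcal{S}_r\Lambda^k:=\mathcal{P}_r\Lambda^k+\mathcal{J}_r\Lambda^k+d\,\mathcal{J}_{r+1}\Lambda^{k-1}$ (forms of degree $-1$ or $n+1$ are $0$), and for $r\ge1$ the trimmed serendipity space $\mathcal{S}_r^-\Lambda^k:=\mathcal{S}_{r-1}\Lambda^k+\kappa\,\mathcal{S}_{r-1}\Lambda^{k+1}$, all on $\mathbb{R}^n$. *)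

(* Defs.v *)
From HB Require Import structures.
From mathcomp Require Import all_boot all_order all_algebra.
From Stdlib Require List.
Set Implicit Arguments. Unset Strict Implicit. Unset Printing Implicit Defensive.
Import Order.TTheory GRing.Theory Num.Theory.
Local Open Scope ring_scope.

Section Forms.
Variables (R : realFieldType) (n : nat).

(* a form monomial x^alpha dx_sigma is the pair (alpha, sigma) *)
Definition mon := ({ffun 'I_n -> nat} * {set 'I_n})%type.
(* a (polynomial) form = its coefficient function on form monomials;
   all forms in the spaces below have finite support *)
Definition pform := mon -> R.

Definition mdeg (a : {ffun 'I_n -> nat}) : nat := (\sum_i a i)%N.
Definition addE (a : {ffun 'I_n -> nat}) (i : 'I_n) : {ffun 'I_n -> nat} :=
  [ffun j => (a j + (j == i))%N].
Definition subE (a : {ffun 'I_n -> nat}) (i : 'I_n) : {ffun 'I_n -> nat} :=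
  [ffun j => (a j - (j == i))%N].
Definition nbelow (t : {set 'I_n}) (i : 'I_n) : nat := #|[set l in t | (l < i)%N]|.

(* exterior derivative, coefficientwise:
   d (x^a dx_s) = sum_{i notin s} a_i x^(a-e_i) dx_i /\ dx_s *)
Definition dform (f : pform) : pform := fun m =>
  \sum_(i in m.2) (-1) ^+ nbelow m.2 i * ((m.1 i).+1)%:R * f (addE m.1 i, m.2 :\ i).

(* Koszul operator, coefficientwise:
   kappa (x^a dx_s) = sum_i (-1)^(i+1) x^a x_{s(i)} dx_{s - s(i)} *)
Definition kform (f : pform) : pform := fun m =>
  \sum_(j in ~: m.2 | (0 < m.1 j)%N) (-1) ^+ nbelow m.2 j * f (subE m.1 j, j |: m.2).

Definition ldeg (m : mon) : nat := #|[set i | (i \notin m.2) && (m.1 i == 1%N)]|.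

Definition supported (P : mon -> bool) (f : pform) : Prop :=
  forall m, ~~ P m -> f m = 0.

Definition Hsp (r k : nat) := supported (fun m => (mdeg m.1 == r) && (#|m.2| == k)).
Definition Hlsp (r l k : nat) :=
  supported (fun m => [&& mdeg m.1 == r, #|m.2| == k & (l <= ldeg m)%N]).
Definition Psp (r k : nat) := supported (fun m => (mdeg m.1 <= r)%N && (#|m.2| == k)).

(* J_r Lambda^k = sum_{l >= 1} kappa H_{r+l-1,l} Lambda^{k+1} (finite sums of elements) *)
Definition Jsp (r k : nat) (f : pform) : Prop :=
  exists s : seq (nat * pform),
    (forall p, List.In p s -> (1 <= p.1)%N /\ Hlsp (r + p.1 - 1) p.1 k.+1 p.2)
    /\ forall m, f m = \sum_(p <- s) kform p.2 m.

Definition dJsp (r k : nat) (f : pform) : Prop :=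
  match k with
  | 0 => forall m, f m = 0
  | k'.+1 => exists g, Jsp r.+1 k' g /\ forall m, f m = dform g m
  end.

Definition Ssp (r k : nat) (f : pform) : Prop :=
  exists p j h, Psp r k p /\ Jsp r k j /\ dJsp r k h /\
    forall m, f m = p m + j m + h m.

(* trimmed serendipity space S_r^- Lambda^k  (meaningful for r >= 1) *)
Definition Sminus (r k : nat) (f : pform) : Prop :=
  exists a b, Ssp r.-1 k a /\ Ssp r.-1 k.+1 b /\ forall m, f m = a m + kform b m.

Definition constf (c : R) : pform := fun m =>
  if (m.1 == [ffun => 0%N]) && (m.2 == set0) then c else 0.

End Forms.

(* Main.v *)
Require Import Defs.
From HB Require Import structures.
From mathcomp Require Import all_boot all_order all_algebra.
From mathcomp Require Import ring lra zify.
From Stdlib Require Import FunctionalExtensionality.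
Set Implicit Arguments. Unset Strict Implicit. Unset Printing Implicit Defensive.
Import Order.TTheory GRing.Theory Num.Theory.
Local Open Scope ring_scope.

Section Aux.
Variables (R : realFieldType) (n : nat).
Implicit Types (s t : {set 'I_n}) (a : {ffun 'I_n -> nat}) (f : pform R n).

Lemma nbelowU1 t i j : i \notin t -> nbelow (i |: t) j = (nbelow t j + (i < j))%N.
Proof.
move=> it; rewrite /nbelow; case h: (i < j)%N.
- have -> : [set l in i |: t | (l < j)%N] = i |: [set l in t | (l < j)%N].
    apply/setP=> l; rewrite !inE; case: (eqVneq l i) => [->|] //=; by rewrite h.
  by rewrite cardsU1 inE (negbTE it) addn1.
- have -> : [set l in i |: t | (l < j)%N] = [set l in t | (l < j)%N].
    apply/setP=> l; rewrite !inE; case: (eqVneq l i) => [->|] //=; by rewrite h andbF.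
  by rewrite addn0.
Qed.

Lemma nbelowD1 s i j : i \in s -> nbelow s j = (nbelow (s :\ i) j + (i < j))%N.
Proof. by move=> iS; rewrite -nbelowU1 ?setD11 // setD1K. Qed.

Lemma nbelowD1self s i : nbelow (s :\ i) i = nbelow s i.
Proof.
case iS: (i \in s); first by rewrite (nbelowD1 i iS) ltnn addn0.
by congr nbelow; apply/setP=> l; rewrite !inE; case: (eqVneq l i) => [->|]; rewrite ?iS.
Qed.

Lemma nbelowU1self s i : nbelow (i |: s) i = nbelow s i.
Proof.
case iS: (i \in s); first by rewrite (setUidPr _) // sub1set.
by rewrite nbelowU1 ?iS // ltnn addn0.
Qed.

Lemma sgb (b : bool) (k : nat) : (-1) ^+ (k + b) = (if b then -1 else 1) * ((-1) ^+ k : R).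
Proof. by case: b; rewrite ?addn1 ?addn0 ?exprS ?mul1r. Qed.

Lemma antisym0 (G : 'I_n -> 'I_n -> R) : (forall i j, G i j = - G j i) ->
  \sum_i \sum_j G i j = 0.
Proof.
move=> GA; set S := (X in X = 0).
have : S = - S.
  rewrite {1}/S exchange_big /S -sumrN; apply: eq_bigr => j _.
  rewrite -sumrN; apply: eq_bigr => i _; exact: GA.
move=> h; lra.
Qed.


Lemma addE_ne a i j : j != i -> addE a i j = a j.
Proof. by move=> h; rewrite ffunE (negbTE h) addn0. Qed.

Lemma addEC a i j : addE (addE a i) j = addE (addE a j) i.
Proof. by apply/ffunP=> l; rewrite !ffunE -!addnA [((l == j) + _)%N]addnC. Qed.

Lemma dd0 f m : dform (dform f) m = 0.
Proof.
case: m => a s; rewrite /dform /=.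
pose G i j := if (i \in s) && (j \in s :\ i) then
  (-1)^+nbelow s i * ((a i).+1)%:R * ((-1)^+ nbelow (s:\i) j * ((addE a i j).+1)%:R
     * f (addE (addE a i) j, (s :\ i) :\ j)) else (0 : R).
rewrite big_mkcond /=; transitivity (\sum_i \sum_j G i j).
  apply: eq_bigr => i _; rewrite /G; case: (i \in s) => /=; last by rewrite big1.
  rewrite mulr_sumr big_mkcond; apply: eq_bigr => j _; by case: (j \in s :\ i).
apply: antisym0 => i j; rewrite /G.
have -> : (i \in s) && (j \in s :\ i) = (j \in s) && (i \in s :\ j).
  by rewrite !inE eq_sym; case: (i \in s); case: (j \in s); rewrite ?andbF.
case: ifP => [/andP[jS]|]; last by rewrite oppr0.
rewrite in_setD1 => /andP[ij iS].
rewrite !addE_ne // 1?eq_sym // addEC.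
have -> : (s :\ i) :\ j = (s :\ j) :\ i by apply/setP=> l; rewrite !inE; case: (l == i); case: (l == j).
rewrite (nbelowD1 j iS) (nbelowD1 i jS) !sgb.
case: ltngtP ij => [_ _|_ _|/val_inj ->]; last by rewrite eqxx.
- move: (f _) => F; ring.
- move: (f _) => F; ring.
Qed.


Lemma subE_ne a i j : j != i -> subE a i j = a j.
Proof. by move=> h; rewrite ffunE (negbTE h) subn0. Qed.

Lemma subEC a i j : subE (subE a i) j = subE (subE a j) i.
Proof. by apply/ffunP=> l; rewrite !ffunE -!subnDA addnC. Qed.

Lemma kk0 f m : kform (kform f) m = 0.
Proof.
case: m => a s; rewrite /kform /=.
pose G i j := if ((i \in ~: s) && (0 < a i)%N) && ((j \in ~: (i |: s)) && (0 < subE a i j)%N) then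
  (-1)^+nbelow s i * ((-1)^+ nbelow (i |: s) j * f (subE (subE a i) j, j |: (i |: s))) else (0 : R).
rewrite big_mkcond /=; transitivity (\sum_i \sum_j G i j).
  apply: eq_bigr => i _; rewrite /G; case: ((i \in ~: s) && (0 < a i)%N) => /=; last by rewrite big1.
  rewrite mulr_sumr big_mkcond; apply: eq_bigr => j _; by case: ((j \in ~: (i |: s)) && _).
apply: antisym0 => i j; rewrite /G.
have C : forall i j, ((i \in ~: s) && (0 < a i)%N) && ((j \in ~: (i |: s)) && (0 < subE a i j)%N)
   = [&& i \notin s, j \notin s, j != i, (0 < a i)%N & (0 < a j)%N].
  move=> x y; rewrite !inE ffunE; case: eqVneq => [->|_] /=; first by rewrite !andbF.
  rewrite subn0; by case: (x \in s); case: (y \in s); case: (0 < a x)%N; case: (0 < a y)%N.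
rewrite !C.
have -> : [&& i \notin s, j \notin s, j != i, (0 < a i)%N & (0 < a j)%N] =
          [&& j \notin s, i \notin s, i != j, (0 < a j)%N & (0 < a i)%N].
  by rewrite eq_sym; case: (i \in s); case: (j \in s); case: (0 < a i)%N; case: (0 < a j)%N.
case: ifP => [/and5P[jS iS ij _ _]|]; last by rewrite oppr0.
rewrite subEC.
have -> : j |: (i |: s) = i |: (j |: s) by apply/setP=> l; rewrite !inE; case: (l == i); case: (l == j).
rewrite (nbelowU1 j iS) (nbelowU1 i jS) !sgb.
case: ltngtP ij => [_ _|_ _|/val_inj ->]; last by rewrite eqxx.
- move: (f _) => F; ring.
- move: (f _) => F; ring.
Qed.


Lemma subE_addE a i : subE (addE a i) i = a.
Proof. by apply/ffunP=> l; rewrite !ffunE addnK. Qed.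

Lemma addE_subE a i : (0 < a i)%N -> addE (subE a i) i = a.
Proof.
move=> h; apply/ffunP=> l; rewrite !ffunE; case: eqVneq => [->|_]; last by rewrite subn0 addn0.
by rewrite subnK.
Qed.

Lemma sgsq (k : nat) : ((-1) ^+ k : R) * (-1) ^+ k = 1.
Proof. by rewrite -exprMn mulrNN mulr1 expr1n. Qed.

Lemma homotopy f a s :
  dform (kform f) (a, s) + kform (dform f) (a, s) = (mdeg a + #|s|)%:R * f (a, s).
Proof.
rewrite /dform /kform /=.
set F := f (a, s).
pose c i : R := ((a i).+1)%:R.
pose X i j := (-1)^+nbelow s i * c i * ((-1)^+nbelow (s:\i) j * f (subE (addE a i) j, j |: (s:\i))).
pose Y j i := (-1)^+nbelow s j * ((-1)^+nbelow (j|:s) i * ((subE a j i).+1)%:R * f (addE (subE a j) i, (j |: s) :\ i)).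
have DK : \sum_(i in s) (-1)^+nbelow s i * ((a i).+1)%:R *
     \sum_(j in ~:(s:\i) | (0 < addE a i j)%N) (-1)^+nbelow (s:\i) j * f (subE (addE a i) j, j |: (s:\i))
  = \sum_(i in s) c i * F + \sum_(i in s) \sum_(j in ~:s | (0 < a j)%N) X i j.
  rewrite -big_split; apply: eq_bigr => i iS; rewrite (bigD1 i) /=; last first.
    by rewrite !inE eqxx ffunE eqxx addn1.
  rewrite subE_addE setD1K // nbelowD1self mulrDr mulr_sumr; congr (_ + _).
    by rewrite mulrACA sgsq mul1r.
  apply: eq_big => [j|j _] //.
  rewrite !inE ffunE; case: (eqVneq j i) => [->|ne]; first by rewrite iS andbF.
  by rewrite /= addn0 andbT.
have KD : \sum_(j in ~:s | (0 < a j)%N) (-1)^+nbelow s j *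
     \sum_(i in j |: s) (-1)^+nbelow (j|:s) i * ((subE a j i).+1)%:R * f (addE (subE a j) i, (j |: s) :\ i)
   = \sum_(j in ~:s | (0 < a j)%N) (a j)%:R * F + \sum_(j in ~:s | (0 < a j)%N) \sum_(i in s) Y j i.
  rewrite -big_split; apply: eq_bigr => j /andP[]; rewrite inE => jS aj.
  rewrite big_setU1 //= nbelowU1self addE_subE // setU1K // mulrDr mulr_sumr; congr (_ + _).
  rewrite ffunE eqxx subn1 prednK //.
  by rewrite !mulrA sgsq mul1r.
rewrite DK KD addrACA.
have -> : \sum_(i in s) \sum_(j in ~:s | (0 < a j)%N) X i j +
          \sum_(j in ~:s | (0 < a j)%N) \sum_(i in s) Y j i = 0.
  rewrite [Z in _ + Z = 0]exchange_big -big_split big1 // => i iS.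
  rewrite -big_split big1 // => j /andP[]; rewrite inE => jS aj.
  have ij : j != i by apply: contraNneq jS => ->.
  rewrite /X /Y subE_ne 1?eq_sym //.
  have -> : addE (subE a j) i = subE (addE a i) j.
    by apply/ffunP=> l; rewrite !ffunE; case: eqVneq => [->|]; rewrite ?(negbTE ij) ?subn0 ?addn0.
  have -> : (j |: s) :\ i = j |: (s :\ i).
    by apply/setP=> l; rewrite !inE; case: (eqVneq l i) => [->|]; rewrite /= ?andbF // eq_sym (negbTE ij).
  rewrite (nbelowD1 j iS) (nbelowU1 i jS) !sgb /c.
  case: ltngtP ij => [_ _|_ _|/val_inj ->]; last by rewrite eqxx.
  - move: (f _) => G; rewrite /=; ring.
  - move: (f _) => G; rewrite /=; ring.
rewrite addr0 -!mulr_suml -!natr_sum -mulrDl -natrD; congr (_%:R * _).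
have -> : (\sum_(i in s) (a i).+1 = \sum_(i in s) a i + #|s|)%N.
  by rewrite -sum1_card -big_split /=; apply: eq_bigr => i _; rewrite addn1.
have -> : (\sum_(i in ~: s | (0 < a i)%N) a i = \sum_(i | i \notin s) a i)%N.
  rewrite (bigID (fun j => 0 < a j)%N) /= [X in (_ + X)%N]big1; last first.
    by move=> j /andP[_]; rewrite -eqn0Ngt => /eqP.
  rewrite addn0 [RHS](bigID (fun j => 0 < a j)%N) /= [X in (_ = _ + X)%N]big1; last first.
    by move=> j /andP[_]; rewrite -eqn0Ngt => /eqP.
  by rewrite addn0; apply: eq_bigl => j; rewrite inE -andbA andbb.
by rewrite /mdeg [in RHS](bigID (fun i => i \in s)) /= addnAC.
Qed.


Definition scl (c : nat -> R) f : pform R n := fun m => c (mdeg m.1) * f m.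
Definition padd f g : pform R n := fun m => f m + g m.
Definition pzero : pform R n := fun _ => 0.

Lemma mdeg_addE a i : mdeg (addE a i) = (mdeg a).+1.
Proof.
rewrite /mdeg (eq_bigr (fun j => a j + (j == i))%N); last by move=> j _; rewrite ffunE.
rewrite big_split /= -addn1; congr (_ + _)%N; rewrite (bigD1 i) //= eqxx big1 // => j /negbTE -> //.
Qed.

Lemma mdeg_subE a i : (0 < a i)%N -> (mdeg (subE a i)).+1 = mdeg a.
Proof. by move=> h; rewrite -(mdeg_addE _ i) addE_subE. Qed.

Lemma dform_scl c f m : dform (scl c f) m = c (mdeg m.1).+1 * dform f m.
Proof.
rewrite /dform mulr_sumr; apply: eq_bigr => i _; rewrite /scl /= mdeg_addE.
by move: (f _) => x; ring.
Qed.

Lemma kform_sclS c f m : kform (scl (fun d => c d.+1) f) m = c (mdeg m.1) * kform f m.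
Proof.
rewrite /kform mulr_sumr; apply: eq_bigr => j /andP[_ h]; rewrite /scl /= mdeg_subE //.
by move: (f _) => x; ring.
Qed.

Lemma dform_add f g m : dform (padd f g) m = dform f m + dform g m.
Proof. by rewrite /dform -big_split; apply: eq_bigr => i _; rewrite /padd mulrDr. Qed.

Lemma kform_add f g m : kform (padd f g) m = kform f m + kform g m.
Proof. by rewrite /kform -big_split; apply: eq_bigr => i _; rewrite /padd mulrDr. Qed.

Lemma dform0 m : dform pzero m = 0.
Proof. by rewrite /dform big1 // => i _; rewrite /pzero mulr0. Qed.

Lemma kform0 m : kform pzero m = 0.
Proof. by rewrite /kform big1 // => i _; rewrite /pzero mulr0. Qed.

Lemma dform_ext f g : (forall m, f m = g m) -> dform f = dform g.
Proof. by move=> h; rewrite (functional_extensionality _ _ h). Qed.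

Lemma kform_ext f g : (forall m, f m = g m) -> kform f = kform g.
Proof. by move=> h; rewrite (functional_extensionality _ _ h). Qed.

Definition supp2 (P : nat -> nat -> bool) f :=
  supported (fun m : mon n => P (mdeg m.1) #|m.2|) f.

Lemma supp_weak (P Q : mon n -> bool) f : supported P f -> (forall m, P m -> Q m) -> supported Q f.
Proof. by move=> h PQ m /negP nQ; apply: h; apply/negP=> /PQ. Qed.

Lemma supp_scl (P : mon n -> bool) c f : supported P f -> supported P (scl c f).
Proof. by move=> h m nP; rewrite /scl h // mulr0. Qed.

Lemma supp_add (P : mon n -> bool) f g : supported P f -> supported P g -> supported P (padd f g).
Proof. by move=> h1 h2 m nP; rewrite /padd h1 // h2 // addr0. Qed.

Lemma supp_sum (P : mon n -> bool) (T : Type) (s : seq T) (F : T -> pform R n) :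
  (forall p, List.In p s -> supported P (F p)) -> supported P (fun m => \sum_(p <- s) F p m).
Proof.
elim: s => [|x s IH] h m nP; first by rewrite big_nil.
rewrite big_cons (h x) /= ?IH ?add0r //; first by move=> p ps; apply: h; right.
by left.
Qed.

Lemma dform_supp2 (P : nat -> nat -> bool) f : supp2 P f ->
  supp2 (fun d c => (0 < c)%N && P d.+1 c.-1) (dform f).
Proof.
move=> h [a s] /= nP; rewrite /dform big1 // => i /= iS.
rewrite h ?mulr0 //= mdeg_addE.
by move: nP; rewrite (cardsD1 i s) iS.
Qed.

Lemma kform_supp2 (P : nat -> nat -> bool) f : supp2 P f ->
  supp2 (fun d c => P d.-1 c.+1) (kform f).
Proof.
move=> h [a s] /= nP; rewrite /kform big1 // => j /= /andP[]; rewrite inE => jS aj.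
rewrite h ?mulr0 //= cardsU1 (negbTE jS) /=; move: nP; rewrite -(mdeg_subE aj) /=.
by [].
Qed.


Lemma Jsp0 r k : Jsp r k pzero.
Proof. by exists [::]; split => // m; rewrite big_nil. Qed.

Lemma Jsp_add r k f g : Jsp r k f -> Jsp r k g -> Jsp r k (padd f g).
Proof.
move=> [s1 [H1 E1]] [s2 [H2 E2]]; exists (s1 ++ s2); split.
  by move=> p hp; case: (List.in_app_or _ _ _ hp) => h; [apply: H1 | apply: H2].
by move=> m; rewrite big_cat /padd E1 E2.
Qed.

Lemma Jsp_scl r k c f : Jsp r k f -> Jsp r k (scl c f).
Proof.
move=> [s [H E]]; exists (map (fun p => (p.1, scl (fun d => c d.+1) p.2)) s); split.
  move=> p /List.in_map_iff [q [<- qs]] /=; have [h1 h2] := H q qs; split => //.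
  exact: supp_scl.
move=> m; rewrite big_map /scl E mulr_sumr; apply: eq_bigr => p _.
by rewrite kform_sclS.
Qed.

Lemma dJsp0 r k : dJsp r k pzero.
Proof. case: k => [|k] //=; exists pzero; split; [exact: Jsp0| by move=> m; rewrite dform0]. Qed.

Lemma dJsp_add r k f g : dJsp r k f -> dJsp r k g -> dJsp r k (padd f g).
Proof.
case: k => [|k] /=; first by move=> h1 h2 m; rewrite /padd h1 h2 addr0.
move=> [g1 [J1 E1]] [g2 [J2 E2]]; exists (padd g1 g2); split; first exact: Jsp_add.
by move=> m; rewrite dform_add /padd E1 E2.
Qed.

Lemma dJsp_scl r k c f : dJsp r k f -> dJsp r k (scl c f).
Proof.
case: k => [|k] /=; first by move=> h m; rewrite /scl h mulr0.
move=> [g [J E]]; exists (scl (fun d => c d.-1) g); split; first exact: Jsp_scl.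
by move=> m; rewrite dform_scl /scl E.
Qed.

Lemma Ssp0 r k : Ssp r k pzero.
Proof.
exists pzero, pzero, pzero; split; first by move=> m _.
split; first exact: Jsp0. split; first exact: dJsp0.
by move=> m; rewrite /pzero !addr0.
Qed.

Lemma Ssp_add r k f g : Ssp r k f -> Ssp r k g -> Ssp r k (padd f g).
Proof.
move=> [p1 [j1 [h1 [P1 [J1 [D1 E1]]]]]] [p2 [j2 [h2 [P2 [J2 [D2 E2]]]]]].
exists (padd p1 p2), (padd j1 j2), (padd h1 h2); split; first exact: supp_add.
split; first exact: Jsp_add. split; first exact: dJsp_add.
move=> m; rewrite /padd E1 E2; ring.
Qed.

Lemma Ssp_scl r k c f : Ssp r k f -> Ssp r k (scl c f).
Proof.
move=> [p1 [j1 [h1 [P1 [J1 [D1 E1]]]]]].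
exists (scl c p1), (scl c j1), (scl c h1); split; first exact: supp_scl.
split; first exact: Jsp_scl. split; first exact: dJsp_scl.
move=> m; rewrite /scl E1; ring.
Qed.

Lemma Jsp_card r k f : Jsp r k f -> supp2 (fun _ c => c == k) f.
Proof.
move=> [s [H E]] m nP; rewrite E.
suff SS : supported (fun m : mon n => #|m.2| == k) (fun m => \sum_(p <- s) kform p.2 m) by exact: SS.
apply: supp_sum => p /H [_ hp].
have h2 : supp2 (fun _ c => c == k.+1) p.2.
  by apply: (supp_weak hp) => x /and3P[_ -> _].
exact: (kform_supp2 h2).
Qed.

Lemma dJsp_card r k f : dJsp r k f -> supp2 (fun _ c => c == k) f.
Proof.
case: k => [|k] /=; first by move=> h m _; rewrite h.
move=> [g [J E]] m nP; rewrite E.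
have SS : supported (fun x : mon n => #|x.2| == k.+1) (dform g).
  apply: (supp_weak (dform_supp2 (Jsp_card J))) => x /=.
  by case: #|x.2| => [|c] //= /eqP ->.
exact: SS.
Qed.

Lemma Ssp_card r k f : Ssp r k f -> supp2 (fun _ c => c == k) f.
Proof.
move=> [p1 [j1 [h1 [P1 [J1 [D1 E1]]]]]] m nP.
rewrite E1 (Jsp_card J1) // (dJsp_card D1) // P1 ?addr0 //.
by apply: contra nP => /andP[_].
Qed.

Lemma Sminus_card r k f : Sminus r k f -> supp2 (fun _ c => c == k) f.
Proof.
move=> [a [b [Sa [Sb E]]]] m nP.
by rewrite E (Ssp_card Sa) // (kform_supp2 (Ssp_card Sb)) // addr0.
Qed.


Lemma Ssp_ext r k f g : (forall m, f m = g m) -> Ssp r k f -> Ssp r k g.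
Proof. by move=> h; rewrite (functional_extensionality _ _ h). Qed.

Lemma Psp_Ssp r k f : Psp r k f -> Ssp r k f.
Proof.
move=> P; exists f, pzero, pzero; split => //; split; first exact: Jsp0.
split; first exact: dJsp0. by move=> m; rewrite /pzero !addr0.
Qed.

Lemma in_filterP (T : Type) (P : pred T) (p : T) (s : seq T) : List.In p (filter P s) -> List.In p s /\ P p.
Proof.
elim: s => [|x s IH] //=; case Px: (P x) => /=.
  by case=> [<-|/IH[]]; [split; [left|] | split => //; right].
by move/IH => [] h1 h2; split => //; right.
Qed.

Lemma supp_sumP (P : mon n -> bool) (T : Type) (s : seq T) (Q : pred T) (F : T -> pform R n) :
  (forall p, List.In p s -> Q p -> supported P (F p)) ->
  supported P (fun m => \sum_(p <- s | Q p) F p m).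
Proof.
move=> h m nP; rewrite -big_filter.
suff SS : supported P (fun m => \sum_(p <- filter Q s) F p m) by exact: SS.
apply: supp_sum => p hp; have [h1 h2] := in_filterP hp; exact: h.
Qed.

Lemma dform_sum (T : Type) (s : seq T) (Q : pred T) (F : T -> pform R n) m :
  dform (fun m => \sum_(p <- s | Q p) F p m) m = \sum_(p <- s | Q p) dform (F p) m.
Proof.
rewrite /dform exchange_big; apply: eq_bigr => i _; by rewrite mulr_sumr.
Qed.

Lemma dk_Psp r k q : supp2 (fun d c => (d == r) && (c == k.+1)) q ->
  Psp r k.+1 (dform (kform q)).
Proof.
move=> hq [a s] nP.
have H := homotopy q a s.
have -> : dform (kform q) (a, s) = (mdeg a + #|s|)%:R * q (a, s) - kform (dform q) (a, s).
  by rewrite -H addrK.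
have hq' : supp2 (fun d c => (d <= r)%N && (c == k.+1)) (kform (dform q)).
  apply: (supp_weak (kform_supp2 (dform_supp2 hq))) => x /=. move=> /andP[/eqP e ->].
  by rewrite andbT -e leqSpred.
rewrite hq' // hq ?mulr0 ?subr0 //=.
by apply: contra nP => /andP[/eqP -> ->]; rewrite leqnn.
Qed.

Lemma Jsp_d r k f : Jsp r k f -> Ssp r k.+1 (dform f).
Proof.
move=> [s [H E]].
have -> : dform f = (fun m => \sum_(p <- s) dform (kform p.2) m).
  apply: functional_extensionality => m.
  rewrite (dform_ext (g := fun m => \sum_(p <- s | true) kform p.2 m)) //.
  by rewrite dform_sum.
pose g := fun m => \sum_(p <- s | p.1 != 1%N) kform p.2 m.
exists (fun m => \sum_(p <- s | p.1 == 1%N) dform (kform p.2) m), pzero, (dform g).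
split.
  apply: supp_sumP => p ps /eqP p1; have [_ hp] := H p ps.
  apply: dk_Psp; apply: (supp_weak hp) => x /and3P[/eqP -> -> _].
  by rewrite p1 addnK eqxx.
split; first exact: Jsp0.
split.
  exists g; split => //.
  exists (map (fun p => (p.1.-1, p.2)) (filter (fun p => p.1 != 1%N) s)); split.
    move=> q hq; have [p [<- hp']] := proj1 (List.in_map_iff _ _ _) hq.
    have [ps p1] := in_filterP hp'; rewrite /=.
    have [l1 hp] := H p ps.
    have l2 : (1 < p.1)%N by rewrite ltn_neqAle eq_sym p1 l1.
    split; first lia.
    apply: (supp_weak hp) => x /and3P[/eqP -> -> hl].
    apply/and3P; split => //; [apply/eqP; lia | lia].
  by move=> m; rewrite big_map big_filter.
move=> m; rewrite /pzero addr0 dform_sum (bigID (fun p => p.1 == 1%N)) /=.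
by congr (_ + _); apply: eq_bigl => p.
Qed.

Lemma Ssp_d r k f : Ssp r k f -> Ssp r k.+1 (dform f).
Proof.
move=> [p1 [j1 [h1 [P1 [J1 [D1 E1]]]]]].
have Dh : forall m, dform h1 m = 0.
  move: D1; case: k {P1 J1 E1} => [|k] /=.
    by move=> h m; rewrite (dform_ext (g := pzero)) // dform0.
  by move=> [g [_ E]] m; rewrite (dform_ext E) dd0.
apply: (@Ssp_ext _ _ (padd (padd (dform p1) (dform j1)) pzero)).
  have Ef : dform f = dform (padd (padd p1 j1) h1) by apply: dform_ext => m; rewrite E1.
  by move=> m; rewrite Ef !dform_add Dh /padd /pzero !addr0.
apply: Ssp_add; last exact: Ssp0.
apply: Ssp_add; last exact: Jsp_d.
apply: Psp_Ssp.
rewrite /Psp; apply: (supp_weak (dform_supp2 (P := fun d c => (d <= r)%N && (c == k)) P1)) => x /= /and3P[c0 h /eqP e].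
apply/andP; split; [lia | apply/eqP; lia].
Qed.

End Aux.

Unset Implicit Arguments.
Set Strict Implicit.

Theorem mainTheorem5 (R : realFieldType) (n r : nat) :
  (1 <= n)%N -> (1 <= r)%N ->
  (* the maps are well defined *)
  (forall c : R, Sminus r 0 (@constf R n c)) /\
  (forall (k : nat) (f : pform R n), (k < n)%N -> Sminus r k f -> Sminus r k.+1 (dform f)) /\
  (* exactness at R : the inclusion is injective *)
  (forall c c' : R, (forall m, @constf R n c m = @constf R n c' m) -> c = c') /\
  (* exactness at S_r^- L^0 : ker d = constants *)
  (forall f : pform R n, Sminus r 0 f -> (forall m, dform f m = 0) ->
     exists c : R, forall m, f m = @constf R n c m) /\
  (* exactness at S_r^- L^(k+1), 0 <= k < n (for k+1 = n: d is onto) *)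
  (forall (k : nat) (f : pform R n), (k < n)%N -> Sminus r k.+1 f ->
     (forall m, dform f m = 0) ->
     exists g, Sminus r k g /\ forall m, f m = dform g m).
Proof.
move=> n1 r1; split; [|split; [|split; [|split]]].
- move=> c; exists (constf c), (@pzero R n); split.
    apply: Psp_Ssp => -[a s]; rewrite /constf /=.
    case: ifP => // /andP[/eqP -> /eqP ->] /negP []. 
    rewrite cards0 eqxx andbT /mdeg big1 // => i _; by rewrite ffunE.
  split; first exact: Ssp0.
  by move=> m; rewrite kform0 addr0.
- move=> k f _ [a [b [Sa [Sb E]]]].
  pose c1 := fun d => ((d + k.+1)%:R : R).
  exists (padd (dform a) (scl c1 b)), (scl (fun _ => -1) (dform b)).
  split; first exact: (Ssp_add (Ssp_d Sa) (Ssp_scl _ Sb)).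
  split; first exact: (Ssp_scl _ (Ssp_d Sb)).
  move=> [a0 s].
  have Ef : dform f = dform (padd a (kform b)) by apply: dform_ext => m; rewrite E.
  have K := kform_sclS (fun _ => -1) (dform b) (a0, s).
  rewrite /= in K; rewrite K Ef dform_add.
  have H := homotopy b a0 s.
  have -> : dform (kform b) (a0, s) = (mdeg a0 + #|s|)%:R * b (a0, s) - kform (dform b) (a0, s).
    by rewrite -H addrK.
  rewrite /padd /scl /c1 /=.
  case: (eqVneq #|s| k.+1) => [-> | ne]; first by ring.
  rewrite (Ssp_card Sb) //=; ring.
- move=> c c' h; have := h ([ffun => 0%N], set0); by rewrite /constf /= !eqxx.
- move=> f Sf df; exists (f ([ffun => 0%N], set0)) => -[a s].
  have card := Sminus_card Sf.
  have H := homotopy f a s.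
  have k0 : forall m, kform f m = 0 by move=> m; apply: (kform_supp2 card).
  rewrite (dform_ext (g := @pzero R n)) // dform0 add0r in H.
  rewrite (kform_ext (g := @pzero R n)) // kform0 in H.
  rewrite /constf /=; case: ifP => [/andP[/eqP -> /eqP ->] // | hne].
  case: (eqVneq #|s| 0%N) => [s0|sn0]; last by apply: card.
  move/eqP: s0; rewrite cards_eq0 => /eqP s0; subst s.
  have da : mdeg a != 0%N.
    apply: contraFN hne => /eqP /eqP; rewrite sum_nat_eq0 => /forallP h0.
    rewrite eqxx andbT; apply/eqP/ffunP => i; rewrite ffunE; apply/eqP; exact: h0.
  move/eqP: H; rewrite eq_sym mulf_eq0 pnatr_eq0 cards0 addn0 (negbTE da) /=.
  by move/eqP.
- move=> k f _ Sf df.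
  have card := Sminus_card Sf.
  have [a [b [Sa [Sb E]]]] := Sf.
  pose c := fun d => ((d + k.+1)%:R : R)^-1.
  exists (kform (scl c f)); split.
    exists (@pzero R n), (scl c a); split; first exact: Ssp0.
    split; first exact: Ssp_scl.
    move=> m; rewrite /pzero add0r.
    have Ef : scl c f = padd (scl c a) (kform (scl (fun d => c d.+1) b)).
      apply: functional_extensionality => m'.
      by rewrite /padd kform_sclS /scl E mulrDr.
    by rewrite Ef kform_add kk0 addr0.
  move=> [a0 s].
  have H := homotopy (scl c f) a0 s.
  rewrite (kform_ext (f := dform (scl c f)) (g := @pzero R n)) ?kform0 ?addr0 in H; last first.
    by move=> m; rewrite dform_scl df mulr0.
  rewrite H /scl /=.
  case: (eqVneq (f (a0, s)) 0) => [->|fn0]; first by rewrite !mulr0.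
  case: (eqVneq #|s| k.+1) => [->|ne]; last by move: fn0; rewrite card //= eqxx.
  by rewrite /c mulrA mulfV ?mul1r // pnatr_eq0 addnS.
Qed.
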